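(* Let $d,p\ge1$, let $\eta:\mathbb R^d\to\mathbb R$ be measurable, let $P_1,\dots,P_d$ be probability distributions on $\mathbb R$, let $\Theta\subset\mathbb R^p$ be compact and $(C_\theta)_{\theta\in\Theta}$ a family of $d$-dimensional copulas; let $P_\theta$ be the distribution on $\mathbb R^d$ with marginals $P_1,\dots,P_d$ and copula $C_\theta$, and $G_\theta$ the CDF of $\eta(\mathbf X)$ for $\mathbf X\sim P_\theta$. For a CDF $G$ let $G^{-1}(\alpha)=\inf\{y:G(y)\ge\alpha\}$. Fix $\alpha\in(0,1)$ and assume: (A2) for every $\theta\in\Theta$, $G_\theta$ is continuous; (A3) for every $\theta\in\Theta$, $G_\theta$ is strictly increasing, and there is a function $\underline{\epsilon}_\Theta:(0,\infty)\to(0,\infty)$ with $\min\big(G_\theta(y_\theta+\delta)-G_\theta(y_\theta),\,G_\theta(y_\theta)-G_\theta(y_\theta-\delta)\big)\ge\underline{\epsilon}_\Theta(\delta)$ for all $\theta\in\Theta$, $\delta>0$, where $y_\theta=G_\theta^{-1}(\alpha)$. Let $(\Theta_{K_n})_{n\ge1}$ be finite subsets of $\Theta$ of cardinality $K_n\le K n^\beta$ for some constants $K,\beta>0$. For each $n$ and $\theta\in\Theta_{K_n}$ let $\mathbf X_1,\dots,\mathbf X_n$ be i.i.d. with law $P_\theta$ (all on a common probability space), $Y_i=\eta(\mathbf X_i)$, $\widehat G_\theta(y)=\frac1n\sum_{i=1}^n\mathbf 1_{Y_i\le y}$ and $\widehat G_\theta^{-1}(\alpha)=\inf\{y:\widehat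 G_\theta(y)\ge\alpha\}$. Then for every $\epsilon>0$, $$\mathbb P\Big(\sup_{\theta\in\Theta_{K_n}}\big|\widehat G_\theta^{-1}(\alpha)-G_\theta^{-1}(\alpha)\big|>\epsilon\Big)\xrightarrow[n\to\infty]{}0.$$
   Context: A $d$-dimensional copula is a CDF on $[0,1]^d$ with uniform marginals; $P_\theta$ has joint CDF $C_\theta(F_1(x_1),\dots,F_d(x_d))$ with $F_j$ the CDF of $P_j$. *)

(* Defs.v *)
From HB Require Import structures.
From mathcomp Require Import all_boot all_order all_algebra.
From mathcomp Require Import all_classical all_reals all_analysis.
Set Implicit Arguments. Unset Strict Implicit. Unset Printing Implicit Defensive.
Import Order.TTheory GRing.Theory Num.Theory.
Import numFieldNormedType.Exports.
Local Open Scope classical_set_scope.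
Local Open Scope ring_scope.

(* R^d is represented by d.-tuple R, with the product (= Borel) sigma-algebra
   provided by MathComp-Analysis (generated by the coordinate maps). *)

Definition orthant (R : realType) (d : nat) (u : d.-tuple R) : set (d.-tuple R) :=
  [set x | forall j : 'I_d, tnth x j <= tnth u j].

Definition cdf1 (R : realType) (mu : probability R R) (x : R) : R :=
  fine (mu `]-oo, x]%classic).

Definition is_copula (R : realType) (d : nat) (C : d.-tuple R -> R) : Prop :=
  exists mu : probability (d.-tuple R) R,
    mu [set x | forall j : 'I_d, 0 <= tnth x j <= 1] = 1%E /\
    (forall (j : 'I_d) (t : R), 0 <= t <= 1 ->
        mu [set x | tnth x j <= t] = t%:E) /\
    (forall u : d.-tuple R, (forall j : 'I_d, 0 <= tnth u j <= 1) ->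
        C u = fine (mu (orthant u))).

Definition ginv (R : realType) (G : R -> R) (a : R) : R :=
  inf [set y | a <= G y].

Definition has_law (dO : measure_display) (O : measurableType dO) (R : realType)
  (P : probability O R) (d : nat) (X : O -> d.-tuple R)
  (mu : probability (d.-tuple R) R) : Prop :=
  measurable_fun setT X /\
  forall B : set (d.-tuple R), measurable B -> P (X @^-1` B) = mu B.

Definition mutually_independent (dO : measure_display) (O : measurableType dO)
  (R : realType) (P : probability O R) (d n : nat) (X : nat -> O -> d.-tuple R) :
  Prop :=
  forall B : nat -> set (d.-tuple R), (forall i, measurable (B i)) ->
    P (\bigcap_(i in [set i | (i < n)%N]) (X i @^-1` B i)) =
    (\prod_(i < n) P (X i @^-1` B i))%E.

Definition ecdf (R : realType) (d n : nat) (eta : d.-tuple R -> R)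
  (X : nat -> d.-tuple R) (y : R) : R :=
  n%:R^-1 * \sum_(i < n) (nat_of_bool (eta (X i) <= y)%R)%:R.

Definition pushcdf (R : realType) (d : nat) (mu : probability (d.-tuple R) R)
  (eta : d.-tuple R -> R) (y : R) : R :=
  fine (mu (eta @^-1` `]-oo, y]%classic)).

(* Main.v *)
Require Import Defs.
From HB Require Import structures.
From mathcomp Require Import all_boot all_order all_algebra.
From mathcomp Require Import all_classical all_reals all_analysis.
From mathcomp Require Import ring lra.
From mathcomp Require Import unstable measurable_realfun.
Import Order.TTheory GRing.Theory Num.Theory.
Import numFieldNormedType.Exports.
Local Open Scope classical_set_scope.
Local Open Scope ring_scope.
Set Implicit Arguments. Unset Strict Implicit.
Lemma lbound_of (R : realType) (F : R -> R) (alpha y0 : R) :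
  {homo F : x y / x <= y} -> F y0 < alpha ->
  lbound [set y | alpha <= F y] y0.
Proof.
move=> hF Fy0 y /= Sy; rewrite leNgt; apply/negP => yy0.
have := hF _ _ (ltW yy0); move: Sy Fy0; rewrite -!/(is_true _).
move=> a b c; have := le_lt_trans c b; by rewrite ltNge a.
Qed.
Arguments lbound_of {R F alpha y0}.

Lemma ginv_char (R : realType) (F : R -> R) (alpha : R) :
  {homo F : x y / x <= y} ->
  (exists y, F y < alpha) -> (exists y, alpha <= F y) ->
  (forall z, F z < alpha -> exists2 z', z < z' & F z' < alpha) ->
  forall z, (ginv F alpha <= z) <-> (alpha <= F z).
Proof.
move=> hF [y0 Fy0] [y1 Fy1] hrc z; rewrite /ginv; split => [|Sz].
  move=> hinf; rewrite leNgt; apply/negP => Fz.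
  have [z' zz' Fz'] := hrc z Fz.
  have := lb_le_inf (ex_intro _ y1 Fy1) (lbound_of hF Fz').
  move=> h; have := lt_le_trans zz' h; by rewrite ltNge hinf.
apply: ge_inf => //; exists y0; exact: lbound_of hF Fy0.
Qed.
Lemma fin_bound (R : realType) (Y : nat -> R) n :
  exists M, forall i, (i < n)%N -> `|Y i| <= M.
Proof.
elim: n => [|n [M hM]]; first by exists 0.
exists (Num.max M `|Y n|) => i; rewrite ltnS leq_eqVlt => /orP[/eqP->|hi].
  by rewrite le_max lexx orbT.
by rewrite le_max hM.
Qed.

Lemma fin_gap (R : realType) (Y : nat -> R) (z : R) n :
  exists2 dl, 0 < dl & forall i, (i < n)%N -> z < Y i -> z + dl <= Y i.
Proof.
elim: n => [|n [dl dl0 hdl]]; first by exists 1.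
have [zY|zY] := ltP z (Y n).
  exists (Num.min dl (Y n - z)); first by rewrite lt_min dl0 subr_gt0.
  move=> i; rewrite ltnS leq_eqVlt => /orP[/eqP->|hi] zi.
    by rewrite -lerBrDl ge_min lexx orbT.
  by apply: le_trans (hdl _ hi zi); rewrite lerD2l ge_min lexx.
exists dl => // i; rewrite ltnS leq_eqVlt => /orP[/eqP->|hi] zi.
  by move: zY; rewrite leNgt zi.
exact: hdl.
Qed.

Lemma ecdf_homo (R : realType) d n (eta : d.-tuple R -> R) Xs :
  {homo ecdf n eta Xs : x y / x <= y}.
Proof.
move=> x y xy; rewrite /ecdf ler_wpM2l ?invr_ge0 ?ler0n //.
apply: ler_sum => i _; rewrite ler_nat.
case: (eta (Xs i) <= x) /idP => //= h.
by rewrite (le_trans h xy).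
Qed.

Lemma ecdf_char (R : realType) d n (eta : d.-tuple R -> R) Xs (alpha z : R) :
  (1 <= n)%N -> 0 < alpha <= 1 ->
  (ginv (ecdf n eta Xs) alpha <= z) <-> (alpha <= ecdf n eta Xs z).
Proof.
move=> n1 /andP[a0 a1].
have n0 : (n%:R : R) != 0 by rewrite pnatr_eq0 -lt0n.
apply: ginv_char; first exact: ecdf_homo.
- have [M hM] := fin_bound (fun i => eta (Xs i)) n.
  exists (- M - 1); rewrite /ecdf big1 ?mulr0// => i _.
  case: leP => //= h2; move: (hM i (ltn_ord i)); rewrite ler_norml => /andP[h1 _].
  have := le_trans h1 h2; move=> h; exfalso; lra.
- have [M hM] := fin_bound (fun i => eta (Xs i)) n.
  exists M; rewrite /ecdf (eq_bigr (fun _ => 1)) ?sumr_const ?card_ord.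
    by rewrite ?mulr1n mulVf.
  move=> i _; move: (hM i (ltn_ord i)); rewrite ler_norml => /andP[_ ->] //.
- move=> y Fy; have [dl dl0 hdl] := fin_gap (fun i => eta (Xs i)) y n.
  exists (y + dl / 2); first by rewrite ltrDl divr_gt0.
  suff -> : ecdf n eta Xs (y + dl / 2) = ecdf n eta Xs y by [].
  rewrite /ecdf; congr (_ * _); apply: eq_bigr => i _; congr ((nat_of_bool _)%:R).
  have [h|h] := leP (eta (Xs i)) y.
    by apply/idP; apply: (le_trans h); rewrite lerDl ltW // divr_gt0.
  apply/negbTE; rewrite -ltNge; apply: lt_le_trans (hdl _ (ltn_ord i) h).
  by rewrite ltrD2l ltr_pdivrMr // ltr_pMr // ltr1n.
Qed.

Section pushcdf_lemmas.
Context (R : realType) (d : nat) (mu : probability (d.-tuple R) R)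
  (eta : d.-tuple R -> R) (eta_meas : measurable_fun setT eta).

Lemma meas_pre (A : set R) : measurable A -> measurable (eta @^-1` A).
Proof. by move=> mA; rewrite -[_ @^-1` _]setTI; apply: eta_meas. Qed.

Lemma pushcdf_homo : {homo pushcdf mu eta : x y / x <= y}.
Proof.
move=> x y xy; rewrite /pushcdf fine_le ?fin_num_measure //; try exact: meas_pre.
apply: le_measure; rewrite ?inE; try exact: meas_pre.
by move=> t /=; rewrite !in_itv /= => h; apply: le_trans h xy.
Qed.

Lemma pushcdf_lt (alpha : R) : 0 < alpha -> exists y, pushcdf mu eta y < alpha.
Proof.
move=> a0.
pose F n := eta @^-1` `]-oo, (- n%:R)%R].
have hF : mu \o F @ \oo --> mu (\bigcap_n F n).
  apply: nonincreasing_cvg_mu => //=.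
  + by rewrite (le_lt_trans (probability_le1 _ _)) ?ltry //; apply: meas_pre.
  + by move=> i; apply: meas_pre.
  + apply: bigcap_measurable; first (by exists 0%N); by move=> i _; apply: meas_pre.
  + move=> m n mn; apply/subsetPset => x/=; rewrite /F /= !in_itv/= => /le_trans; apply.
    by rewrite lerN2 ler_nat.
have E0 : \bigcap_n F n = set0.
  rewrite -subset0 => t /(_ (Num.bound (eta t)) I).
  by rewrite /F/= in_itv/= leNgt => /negP; apply; rewrite ltrNl ltrNbound.
rewrite E0 measure0 in hF.
have /fine_cvgP [_ hf] := hF.
have := cvgr_lt _ hf _ a0; case=> N _ hN.
by exists (- N%:R); have := hN N (leqnn N).
Qed.

Lemma pushcdf_gt (alpha : R) : alpha < 1 -> exists y, alpha <= pushcdf mu eta y.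
Proof.
move=> a1.
pose F n := eta @^-1` `]-oo, n%:R].
have hF : mu \o F @ \oo --> mu (\bigcup_n F n).
  apply: nondecreasing_cvg_mu => //=.
  + by move=> i; apply: meas_pre.
  + by apply: bigcup_measurable => i _; apply: meas_pre.
  + move=> m n mn; apply/subsetPset => x/=; rewrite /F /= !in_itv/= => /le_trans; apply.
    by rewrite ler_nat.
have E1 : \bigcup_n F n = setT.
  rewrite -subTset => t _ /=.
  by exists (Num.truncn (eta t)).+1; rewrite //= /F /= in_itv/= ltW// truncnS_gt.
rewrite E1 probability_setT in hF.
have /fine_cvgP [_ hf] := hF.
have := cvgr_gt _ hf _ a1; case=> N _ hN.
by exists N%:R; apply: ltW; have := hN N (leqnn N).
Qed.


Lemma pushcdf_ginv (alpha : R) : 0 < alpha < 1 ->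
  continuous (pushcdf mu eta) ->
  pushcdf mu eta (ginv (pushcdf mu eta) alpha) = alpha.
Proof.
move=> /andP[a0 a1] hc; set G := pushcdf mu eta.
have hch := ginv_char pushcdf_homo (pushcdf_lt a0) (pushcdf_gt a1).
have hrc : forall z, G z < alpha -> exists2 z', z < z' & G z' < alpha.
  move=> z Gz; have H := cvgr_lt _ (hc z) _ Gz.
  have [e e0 he] := (nbhs_ballP _ _).1 (H (nbhs_filter _)).
  exists (z + e / 2); first by rewrite ltrDl divr_gt0.
  apply: he; rewrite /ball /= opprD addrA subrr sub0r normrN gtr0_norm ?divr_gt0 //.
  by rewrite ltr_pdivrMr // ltr_pMr // ltr1n.
have := hch hrc; set y := ginv G alpha => hy.
apply/eqP; rewrite eq_le; apply/andP; split; last exact/hy.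
rewrite leNgt; apply/negP => Gy.
have H := cvgr_gt _ (hc y) _ Gy.
have [e e0 he] := (nbhs_ballP _ _).1 (H (nbhs_filter _)).
have : alpha < G (y - e / 2).
  apply: he; rewrite /ball /= opprB addrCA subrr addr0 gtr0_norm ?divr_gt0 //.
  by rewrite ltr_pdivrMr // ltr_pMr // ltr1n.
move/ltW => /hy h.
have : 0 < e / 2 by rewrite divr_gt0.
move: h; rewrite /y; lra.
Qed.

End pushcdf_lemmas.

Lemma key_ineq (R : realType) (e q c : R) : 0 < e -> e <= 1 -> 0 <= q -> q <= 1 ->
  q <= c - e -> (expR (e / 4) - 1) * q - e / 4 * c <= - (e ^+ 2 / 8).
Proof.
move=> e0 e1 q0 q1 hqc.
set t := e / 4.
have t0 : 0 < t by rewrite divr_gt0.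
have t1 : t <= 1 / 4 by rewrite ler_pM2r.
set x := expR t; set y := expR (- t).
have xy : x * y = 1 by rewrite expRxMexpNx_1.
have hy : 1 - t <= y by have := expR_ge1Dx (- t).
have x0 : 0 < x by rewrite expR_gt0.
have h2 : 1 <= y * (1 + t + 2 * t ^+ 2).
  have : (1 - t) * (1 + t + 2 * t ^+ 2) <= y * (1 + t + 2 * t ^+ 2).
    by rewrite ler_pM2r // ltr_wpDr ?mulr_ge0 ?exprn_ge0 ?ltW // ltr_pwDr.
  apply: le_trans; nra.
have hx : x - 1 <= t + 2 * t ^+ 2.
  have : x <= x * (y * (1 + t + 2 * t ^+ 2)) by rewrite ler_peMr // ltW.
  rewrite mulrA xy mul1r; lra.
have h3 : (x - 1) * q <= (t + 2 * t ^+ 2) * q by rewrite ler_wpM2r.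
have h4 : 2 * t ^+ 2 * q <= 2 * t ^+ 2 by rewrite ler_piMr // mulr_ge0 ?exprn_ge0 // ltW.
have h5 : t * (q - c) <= t * (- e) by apply: ler_wpM2l; [exact: ltW | lra].
have h6 : e ^+ 2 / 8 = 2 * t ^+ 2 by rewrite /t; field.
have h7 : t * (- e) = - 4 * t ^+ 2 by rewrite /t; field.
rewrite h6; nra.
Qed.

Section chernoff.
Context (dO : measure_display) (Omega : measurableType dO) (R : realType)
  (P : probability Omega R) (n : nat) (A : nat -> set Omega)
  (mA : forall i, (i < n)%N -> measurable (A i)).

Definition BI (J : {set 'I_n}) : set Omega :=
  \bigcap_(i in [set i : 'I_n | i \in J]) A i.

Lemma BI_meas J : measurable (BI J).
Proof.
apply: fin_bigcap_measurable; first exact: finite_finset.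
by move=> i _; apply: mA; exact: ltn_ord.
Qed.

Definition cntR (w : Omega) : R := \sum_(i < n) \1_(A i) w.

Lemma cntR_meas : measurable_fun setT cntR.
Proof.
apply: measurable_sum => i; apply/(measurable_indicP _ _).1; apply: mA; exact: ltn_ord.
Qed.

Lemma indic_bigcap (J : {set 'I_n}) w :
  \prod_(i in J) (\1_(A i) w : R) = \1_(BI J) w.
Proof.
case: (pselect (BI J w)) => h.
  rewrite indicE mem_set // big1 // => i iJ; rewrite indicE mem_set //; exact: h i iJ.
rewrite indicE memNset //.
case: (pselect (exists2 i, i \in J & ~ A i w)) => [[i iJ nA]|hn].
  by rewrite (bigD1 i) //= indicE memNset // mul0r.
exfalso; apply: h => i iJ; apply: contrapT => nA; apply: hn; by exists i.
Qed.

Lemma expand_prod (s : R) w :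
  \prod_(i < n) (s * \1_(A i) w + 1) = \sum_(J : {set 'I_n}) s ^+ #|J| * \1_(BI J) w.
Proof.
rewrite bigA_distr; apply: eq_bigr => J _.
by rewrite -big_mkcond /= big_split /= prodr_const indic_bigcap.
Qed.

Lemma expand_const (x : R) :
  \sum_(J : {set 'I_n}) x ^+ #|J| = (x + 1) ^+ n.
Proof.
rewrite -[RHS](_ : \prod_(i < n) (x + 1) = _); last first.
  by rewrite prodr_const card_ord.
rewrite bigA_distr; apply: eq_bigr => J _.
by rewrite -big_mkcond /= prodr_const.
Qed.


Definition cntN (w : Omega) : nat := (\sum_(i < n) (w \in A i : nat))%N.

Lemma cntR_N w : cntR w = (cntN w)%:R.
Proof. by rewrite /cntR /cntN natr_sum; apply: eq_bigr => i _; rewrite indicE. Qed.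

Lemma prod_cnt (t : R) w :
  \prod_(i < n) ((expR t - 1) * \1_(A i) w + 1) = expR t ^+ cntN w.
Proof.
rewrite /cntN -prodrXr; apply: eq_bigr => i _; rewrite indicE.
by case: (w \in A i) => /=; rewrite ?mulr1 ?mulr0 ?subrK ?add0r ?expr1 ?expr0.
Qed.

Lemma cnt_ge_meas (c : R) : measurable [set w | (c <= cntR w)%R].
Proof.
rewrite (_ : [set w | _] = cntR @^-1` `[c, +oo[); last first.
  by apply/seteqP; split => w /=; rewrite in_itv /= andbT.
by rewrite -[_ @^-1` _]setTI; apply: cntR_meas => //; exact: measurable_itv.
Qed.

Lemma chernoff_bound (t c q : R) : 0 <= t -> 0 <= q ->
  (forall J : {set 'I_n}, P (BI J) = (q ^+ #|J|)%:E) ->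
  ((expR (t * c))%:E * P [set w | (c <= cntR w)%R] <= (((expR t - 1) * q + 1) ^+ n)%:E)%E.
Proof.
move=> t0 q0 hq.
set s := expR t - 1.
have s0 : 0 <= s by rewrite subr_ge0; apply: le_trans (expR_ge1Dx t); rewrite lerDl.
set E := [set w | c <= cntR w].
have mE : measurable E.
  rewrite (_ : E = cntR @^-1` `[c, +oo[); last first.
    by apply/seteqP; split => w /=; rewrite in_itv /= andbT.
  by rewrite -[_ @^-1` _]setTI; apply: cntR_meas => //; exact: measurable_itv.
have mI (B : set Omega) : measurable B -> measurable_fun setT (\1_B : Omega -> R).
  by move=> mB; exact/(measurable_indicP _ _).1.
have -> : P E = (\int[P]_(w in setT) (\1_E w)%:E)%E by rewrite integral_indic // setIT.
rewrite -(integralZl_indic measurableT (fun _ => E)) //; last first.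
  by move=> h; exfalso; move: h; rewrite ltNge ltW // expR_gt0.
apply: (@le_trans _ _ (\int[P]_(w in setT)
   (\sum_(J : {set 'I_n}) (s ^+ #|J| * \1_(BI J) w)%:E))%E).
  apply: ge0_le_integral => //.
  - apply/measurable_EFinP; apply: measurable_funM => //; exact: mI.
  - apply: emeasurable_sum => J; apply/measurable_EFinP; apply: measurable_funM => //.
    exact: mI (BI_meas J).
  - move=> w _; rewrite sumEFin lee_fin -expand_prod prod_cnt.
    case: (pselect (E w)) => hw.
      rewrite indicE mem_set // mulr1 -expRM_natl ler_expR mulrC -cntR_N.
      by rewrite ler_wpM2r.
    by rewrite indicE memNset // mulr0 exprn_ge0 // expR_ge0.
rewrite ge0_integral_sum //; first last.
- by move=> J w _; rewrite lee_fin mulr_ge0 ?exprn_ge0 // indicE.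
- move=> J; apply/measurable_EFinP; apply: measurable_funM => //.
  exact: mI (BI_meas J).
have -> : (\sum_(J : {set 'I_n}) (\int[P]_(x in setT) (s ^+ #|J| * \1_(BI J) x)%:E))%E
   = (\sum_(J : {set 'I_n}) ((s * q) ^+ #|J|)%:E)%E.
  apply: eq_bigr => J _; rewrite (integralZl_indic measurableT (fun _ => BI J)) //=;
    try exact: BI_meas;
    try (by move=> h; exfalso; move: h; rewrite ltNge exprn_ge0).
  rewrite integral_indic ?setIT; last exact: BI_meas.
  transitivity ((s ^+ #|J|)%:E * (q ^+ #|J|)%:E)%E; first by congr (_ * _)%E; exact: hq.
  by rewrite -EFinM exprMn.
all: try exact: measurableT.
have -> : (\sum_(J : {set 'I_n}) ((s * q) ^+ #|J|)%:E)%E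
   = (\sum_(J : {set 'I_n}) (s * q) ^+ #|J|)%:E by rewrite sumEFin.
by rewrite expand_const.
Qed.


Lemma chernoff_exp (c q e : R) : 0 <= q -> q <= 1 -> 0 < e -> e <= 1 -> q <= c - e ->
  (forall J : {set 'I_n}, P (BI J) = (q ^+ #|J|)%:E) ->
  (P [set w | (c * n%:R <= cntR w)%R] <= (expR (- (e ^+ 2 / 8)) ^+ n)%:E)%E.
Proof.
move=> q0 q1 e0 e1 hqc hq.
set t := e / 4.
have t0 : 0 <= t by rewrite divr_ge0 ?ltW.
have hb := @chernoff_bound t (c * n%:R) q t0 q0 hq.
set E := [set w | (c * n%:R <= cntR w)%R] in hb *.
have mE : measurable E.
  rewrite (_ : E = cntR @^-1` `[c * n%:R, +oo[); last first.
    by apply/seteqP; split => w /=; rewrite in_itv /= andbT.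
  by rewrite -[_ @^-1` _]setTI; apply: cntR_meas => //; exact: measurable_itv.
have hfin : P E \is a fin_num by rewrite fin_num_measure.
rewrite -(fineK hfin) lee_fin; move: hb; rewrite -(fineK hfin) -EFinM lee_fin.
set p := fine (P E) => hb.
set s := expR t - 1.
have s0 : 0 <= s by rewrite subr_ge0; apply: le_trans (expR_ge1Dx t); rewrite lerDl.
have hs : s * q + 1 <= expR (s * q) by rewrite addrC expR_ge1Dx.
have hs2 : (s * q + 1) ^+ n <= expR (s * q) ^+ n.
  by apply: lerXn2r => //; rewrite nnegrE ?addr_ge0 ?mulr_ge0 ?expR_ge0.
rewrite -expRM_natl in hs2; rewrite -expRM_natl.
have key := key_ineq e0 e1 q0 q1 hqc.
have : p * expR (t * (c * n%:R)) <= expR (n%:R * - (e ^+ 2 / 8)) * expR (t * (c * n%:R)).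
  rewrite -expRD mulrC; apply: (le_trans hb); apply: (le_trans hs2).
  rewrite ler_expR.
  have := ler_wpM2l (ler0n R n) key; rewrite -/t -/s; lra.
by rewrite ler_pM2r ?expR_gt0.
Qed.

End chernoff.

Lemma indep_BI (dO : measure_display) (Omega : measurableType dO) (R : realType)
  (P : probability Omega R) (d n : nat) (Xs : nat -> Omega -> d.-tuple R)
  (mu : probability (d.-tuple R) R) (S : set (d.-tuple R)) :
  measurable S -> (forall i, (i < n)%N -> has_law P (Xs i) mu) ->
  mutually_independent P n Xs ->
  forall J : {set 'I_n}, P (BI (fun i => Xs i @^-1` S) J) = (fine (mu S) ^+ #|J|)%:E.
Proof.
move=> mS hlaw hind J.
pose B i : set (d.-tuple R) :=
  if (insub i : option 'I_n) is Some o then (if o \in J then S else setT) else setT.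
have mB : forall i, measurable (B i).
  move=> i; rewrite /B; case: (insub i); last by []; move=> o; by case: (o \in J).
have := hind B mB.
have -> : \bigcap_(i in [set i | (i < n)%N]) (Xs i @^-1` B i) =
    BI (fun i => Xs i @^-1` S) J.
  apply/seteqP; split => w /= h.
  - move=> o /= oJ; have := h o (ltn_ord o); by rewrite /= /B valK oJ.
  - move=> i /= ilt; rewrite /B; case: insubP => [k _ oi | ] //=.
    case: ifP => // oJ; have := h k oJ; by rewrite /= oi.
move=> ->.
rewrite (eq_bigr (fun o => (if o \in J then fine (mu S) else 1)%:E)); last first.
  move=> o _; rewrite /B valK; case: ifP => oJ.
    case: (hlaw o (ltn_ord o)) => _ -> //.
    have hf : mu S \is a fin_num by rewrite fin_num_measure.
    by symmetry; exact: (fineK hf).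
  by rewrite preimage_setT probability_setT.
by rewrite prodEFin -big_mkcond /= prodr_const.
Qed.

Lemma union_seq (dO : measure_display) (Omega : measurableType dO) (R : realType)
  (P : probability Omega R) (T : eqType) (s : seq T) (Q : T -> set Omega) :
  (forall x, x \in s -> measurable (Q x)) ->
  measurable [set w | exists2 x, x \in s & Q x w] /\
  (P [set w | exists2 x, x \in s & Q x w] <= \sum_(x <- s) P (Q x))%E.
Proof.
elim: s => [|a s IH] hQ.
  rewrite (_ : [set w | _] = set0); first by rewrite measure0 big_nil.
  by apply/seteqP; split => w //= -[].
have [m1 h1] : _ := IH (fun x xs => hQ x (@mem_behead _ (a :: s) x xs)).
have ma : measurable (Q a) by apply: hQ; rewrite mem_head.
rewrite (_ : [set w | _] = Q a `|` [set w | exists2 x, x \in s & Q x w]); last first.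
  apply/seteqP; split => w /=.
    by move=> [x]; rewrite in_cons => /orP[/eqP->|xs] qx; [left|right; exists x].
  by move=> [qa|[x xs qx]]; [exists a; rewrite ?mem_head|exists x; rewrite ?in_cons ?xs ?orbT].
split; first exact: measurableU.
rewrite big_cons; apply: le_trans (measureU2 _ ma m1) _.
by rewrite leeD2l.
Qed.

Lemma sum_const_seq (R : realType) (T : Type) (s : seq T) (c : R) :
  \sum_(x <- s) c = c *+ size s.
Proof. by elim: s => [|a s IH]; rewrite ?big_nil // big_cons IH mulrS. Qed.

Lemma fine_prob01 (dT : measure_display) (T : measurableType dT) (R : realType)
  (mu : probability T R) (S : set T) : measurable S ->
  0 <= fine (mu S) /\ fine (mu S) <= 1.
Proof.
move=> mS; split; first by rewrite fine_ge0.
by rewrite -lee_fin fineK ?fin_num_measure // probability_le1.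
Qed.

Section ecdf_meas.
Context (dO : measure_display) (Omega : measurableType dO) (R : realType)
  (d n : nat) (eta : d.-tuple R -> R) (eta_meas : measurable_fun setT eta)
  (Xs : nat -> Omega -> d.-tuple R)
  (hX : forall i, (i < n)%N -> measurable_fun setT (Xs i)).

Lemma pre_meas (S : set (d.-tuple R)) : measurable S ->
  forall i, (i < n)%N -> measurable (Xs i @^-1` S).
Proof. by move=> mS i hi; rewrite -[_ @^-1` _]setTI; apply: hX. Qed.

Definition Sle (z : R) : set (d.-tuple R) := eta @^-1` `]-oo, z].

Lemma Sle_meas z : measurable (Sle z).
Proof. by rewrite /Sle -[_ @^-1` _]setTI; apply: eta_meas => //; exact: measurable_itv. Qed.

Lemma ecdf_cnt z w : ecdf n eta (fun i => Xs i w) z =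
  n%:R^-1 * cntR R n (fun i => Xs i @^-1` Sle z) w.
Proof.
rewrite /ecdf /cntR; congr (_ * _); apply: eq_bigr => i _; rewrite indicE.
case: (boolP (eta (Xs i w) <= z)) => h.
  by rewrite mem_set //= /Sle /= in_itv /= h.
by rewrite memNset //= /Sle /= in_itv /= (negbTE h).
Qed.

Lemma cnt_compl (S : set (d.-tuple R)) w :
  cntR R n (fun i => Xs i @^-1` (~` S)) w = n%:R - cntR R n (fun i => Xs i @^-1` S) w.
Proof.
have -> : (n%:R : R) = \sum_(i < n) (1 : R) by rewrite sumr_const card_ord.
rewrite /cntR -sumrB; apply: eq_bigr => i _.
rewrite !indicE; case: (pselect (S (Xs i w))) => h.
  by rewrite memNset ?mem_set //= subrr.
by rewrite mem_set ?memNset //= subr0.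
Qed.

Lemma ecdf_meas_f z : measurable_fun setT (fun w => ecdf n eta (fun i => Xs i w) z).
Proof.
rewrite (_ : (fun w => _) = (fun w => n%:R^-1 * cntR R n (fun i => Xs i @^-1` Sle z) w)).
  apply: measurable_funM; first exact: measurable_cst.
  by apply: cntR_meas; apply: pre_meas; exact: Sle_meas.
by apply/funext => w; rewrite ecdf_cnt.
Qed.

Lemma ecdf_meas_ge z a : measurable [set w | a <= ecdf n eta (fun i => Xs i w) z].
Proof.
rewrite (_ : [set w | _] = (fun w => ecdf n eta (fun i => Xs i w) z) @^-1` `[a, +oo[).
  by rewrite -[_ @^-1` _]setTI; apply: ecdf_meas_f => //; exact: measurable_itv.
by apply/seteqP; split => w /=; rewrite in_itv /= andbT.
Qed.

Lemma ecdf_meas_lt z a : measurable [set w | ecdf n eta (fun i => Xs i w) z < a].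
Proof.
rewrite (_ : [set w | _] = (fun w => ecdf n eta (fun i => Xs i w) z) @^-1` `]-oo, a[).
  by rewrite -[_ @^-1` _]setTI; apply: ecdf_meas_f => //; exact: measurable_itv.
by apply/seteqP; split => w /=; rewrite in_itv /=.
Qed.

End ecdf_meas.

Lemma poly_geom_bound (R : realType) (beta a : R) : 0 < beta -> 0 < a ->
  exists C, exists2 r, 0 <= r < 1 &
    forall n, (1 <= n)%N -> n%:R `^ beta * expR (- a) ^+ n <= C * r ^+ n.
Proof.
move=> b0 a0.
set l := a / (2 * beta).
have l0 : 0 < l by rewrite divr_gt0 // mulr_gt0.
exists (expR (beta * (-1 - ln l))); exists (expR (- (a / 2))).
  by rewrite expR_ge0 /= expR_lt1 oppr_lt0 divr_gt0.
move=> n n1.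
have n0 : (0 : R) < n%:R by rewrite ltr0n.
rewrite /powR (negbTE (lt0r_neq0 n0)) -!expRM_natl -!expRD ler_expR.
have hln : ln (l * n%:R) <= l * n%:R - 1.
  have := @le_ln1Dx _ (l * n%:R - 1); rewrite addrCA subrr addr0; apply.
  have : 0 < l * n%:R by rewrite mulr_gt0.
  lra.
rewrite lnM ?posrE // in hln.
have hb : beta * ln n%:R <= beta * (l * n%:R - 1 - ln l).
  by apply: ler_wpM2l; [exact: ltW | lra].
have e1 : beta * (l * n%:R) = n%:R * (a / 2).
  rewrite /l; field; by rewrite lt0r_neq0.
move: hb; rewrite !mulrBr e1 => hb.
have e2 : n%:R * - (a / 2) = - (n%:R * (a / 2)) by rewrite mulrN.
have e3 : n%:R * - a = - (n%:R * (a / 2)) - (n%:R * (a / 2)).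
  by rewrite -opprD -mulrDr -splitr mulrN.
rewrite e2 e3.
have : 0 <= n%:R * (a / 2) by rewrite mulr_ge0 // divr_ge0 // ltW.
lra.
Qed.

Unset Implicit Arguments. Set Strict Implicit.

Theorem proposition1 (R : realType) (d p : nat) (hd : (1 <= d)%N) (hp : (1 <= p)%N)
  (eta : d.-tuple R -> R) (eta_meas : measurable_fun setT eta)
  (Pm : 'I_d -> probability R R)
  (Theta : set 'rV[R]_p) (Theta_compact : compact Theta)
  (C : 'rV[R]_p -> d.-tuple R -> R)
  (C_copula : forall th, Theta th -> is_copula (C th))
  (Pth : 'rV[R]_p -> probability (d.-tuple R) R)
  (Pth_cdf : forall th, Theta th -> forall x : d.-tuple R,
      fine (Pth th (orthant x)) = C th [tuple cdf1 (Pm j) (tnth x j) | j < d])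
  (alpha : R) (halpha : 0 < alpha < 1)
  (A2 : forall th, Theta th -> continuous (pushcdf (Pth th) eta))
  (A3_incr : forall th, Theta th -> forall x y : R, x < y ->
      pushcdf (Pth th) eta x < pushcdf (Pth th) eta y)
  (A3_unif : exists epsT : R -> R, forall delta : R, 0 < delta ->
      0 < epsT delta /\
      forall th, Theta th ->
        let G := pushcdf (Pth th) eta in
        let y := ginv G alpha in
        epsT delta <= Num.min (G (y + delta) - G y) (G y - G (y - delta)))
  (ThetaK : nat -> seq 'rV[R]_p)
  (ThetaK_uniq : forall n, uniq (ThetaK n))
  (ThetaK_sub : forall n th, th \in ThetaK n -> Theta th)
  (K beta : R) (hK : 0 < K) (hbeta : 0 < beta)
  (ThetaK_card : forall n, (1 <= n)%N -> (size (ThetaK n))%:R <= K * n%:R `^ beta)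
  (dO : measure_display) (Omega : measurableType dO) (P : probability Omega R)
  (X : nat -> 'rV[R]_p -> nat -> Omega -> d.-tuple R)
  (X_law : forall n th i, (1 <= n)%N -> th \in ThetaK n -> (i < n)%N ->
      has_law P (X n th i) (Pth th))
  (X_indep : forall n th, (1 <= n)%N -> th \in ThetaK n ->
      mutually_independent P n (X n th)) :
  forall eps : R, 0 < eps ->
    (P [set w | exists2 th, th \in ThetaK n &
        (eps < `| ginv (ecdf n eta (fun i => X n th i w)) alpha
                 - ginv (pushcdf (Pth th) eta) alpha |)%R])%E
      @[n --> \oo] --> 0%E.
Proof.
move=> eps eps0.
have [epsT hepsT] := A3_unif.
have [eT0 hT] := hepsT eps eps0.
set e := Num.min (epsT eps) 1.
have e0 : 0 < e by rewrite lt_min eT0 ltr01.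
have e1 : e <= 1 by rewrite ge_min lexx orbT.
have eT : e <= epsT eps by rewrite ge_min lexx.
set r := expR (- (e ^+ 2 / 8)).
have ha' : 0 < alpha <= 1 by case/andP: halpha => -> /ltW ->.
have main : forall n th, (1 <= n)%N -> th \in ThetaK n ->
  measurable [set w | eps < `| ginv (ecdf n eta (fun i => X n th i w)) alpha
                 - ginv (pushcdf (Pth th) eta) alpha |] /\
  (P [set w | (eps < `| ginv (ecdf n eta (fun i => X n th i w)) alpha
                 - ginv (pushcdf (Pth th) eta) alpha |)%R] <= (r ^+ n *+ 2)%:E)%E.
  move=> n th n1 thK.
  have Tth := ThetaK_sub n th thK.
  set G := pushcdf (Pth th) eta.
  set y := ginv G alpha.
  have Gy : G y = alpha := pushcdf_ginv eta_meas halpha (A2 th Tth).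
  have [h1 h2] : epsT eps <= G (y + eps) - G y /\ epsT eps <= G y - G (y - eps).
    by have := hT th Tth; rewrite /= le_min => /andP[].
  set Xs := X n th.
  have hlaw : forall i, (i < n)%N -> has_law P (Xs i) (Pth th).
    by move=> i hi; exact: X_law.
  have hXm : forall i, (i < n)%N -> measurable_fun setT (Xs i).
    by move=> i hi; case: (hlaw i hi).
  have hind := X_indep n th n1 thK.
  set M1 := [set w | ecdf n eta (fun i => Xs i w) (y + eps) < alpha].
  set M2 := \bigcup_k [set w | alpha <= ecdf n eta (fun i => Xs i w) (y - eps - k.+1%:R^-1)].
  set U := [set w | (1 - alpha) * n%:R <= cntR R n (fun i => Xs i @^-1` (~` Sle eta (y + eps))) w].
  set L := [set w | alpha * n%:R <= cntR R n (fun i => Xs i @^-1` Sle eta (y - eps)) w].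
  have hc z w := ecdf_char eta (fun i => Xs i w) z n1 ha'.
  have EM : [set w | (eps < `|ginv (ecdf n eta (fun i => Xs i w)) alpha - y|)%R] = M1 `|` M2.
    apply/seteqP; split => w /=.
    - rewrite ltr_normr => /orP[h|h].
      + left; rewrite /M1 /= ltNge; apply/negP => /(hc _ w).2 hle; lra.
      + right.
        have [k hk] : exists k : nat,
            ginv (ecdf n eta (fun i => Xs i w)) alpha + k.+1%:R^-1 < y - eps.
          by apply: ltr_add_invr; lra.
        exists k => //=; apply/(hc _ w).1; apply/ltW; rewrite ltrBrDr; exact: hk.
    - case => [hw | [k _ hw]].
      + rewrite ltr_normr; apply/orP; left.
        have hn : ~~ (ginv (ecdf n eta (fun i => Xs i w)) alpha <= y + eps).
          by apply/negP => /(hc _ w).1; move: hw; rewrite /M1 /=; lra.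
        move: hn; rewrite -ltNge; lra.
      + rewrite ltr_normr; apply/orP; right.
        have hg : ginv (ecdf n eta (fun i => Xs i w)) alpha <= y - eps - k.+1%:R^-1.
          exact: (hc _ w).2 hw.
        have : 0 < k.+1%:R^-1 :> R by rewrite invr_gt0 ltr0Sn.
        move=> hk0; move: hg hk0; set iv := k.+1%:R^-1 => hg hk0.
        have : eps < y - ginv (ecdf n eta (fun i => Xs i w)) alpha by lra.
        by rewrite opprB.
  have mM1 : measurable M1 by apply: ecdf_meas_lt.
  have mM2 : measurable M2 by apply: bigcup_measurable => k _; apply: ecdf_meas_ge.
  have mS1 : measurable (Sle eta (y - eps)) by apply: Sle_meas.
  have mS2 : measurable (~` Sle eta (y + eps)) by apply: measurableC; exact: Sle_meas.
  have mA2 : forall i, (i < n)%N -> measurable (Xs i @^-1` (~` Sle eta (y + eps))).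
    by move=> i hi; exact (pre_meas hXm mS2 hi).
  have mA1 : forall i, (i < n)%N -> measurable (Xs i @^-1` (Sle eta (y - eps))).
    by move=> i hi; exact (pre_meas hXm mS1 hi).
  have mU : measurable U by rewrite /U; exact: cnt_ge_meas mA2 _.
  have mL : measurable L by rewrite /L; exact: cnt_ge_meas mA1 _.
  have n0 : (0 : R) < n%:R by rewrite ltr0n.
  have sub : M1 `|` M2 `<=` U `|` L.
    move=> w [hw|[k _ hw]].
    - left; rewrite /U /= cnt_compl.
      move: hw; rewrite /M1 /= ecdf_cnt mulrC ltr_pdivrMr //; lra.
    - right; rewrite /L /=.
      have hle : y - eps - k.+1%:R^-1 <= y - eps by rewrite gerBl invr_ge0 ler0n.
      have := le_trans hw (ecdf_homo _ _ _ hle).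
      by rewrite ecdf_cnt (mulrC n%:R^-1) ler_pdivlMr.
  have [q20 q21] := fine_prob01 (Pth th) mS2.
  have [q10 q11] := fine_prob01 (Pth th) mS1.
  have hq2 : fine (Pth th (~` Sle eta (y + eps))) = 1 - G (y + eps).
    rewrite probability_setC; last exact: Sle_meas.
    by rewrite fineB ?fin_num_measure //; exact: Sle_meas.
  have hq1 : fine (Pth th (Sle eta (y - eps))) = G (y - eps) by [].
  have PU : (P U <= (r ^+ n)%:E)%E.
    apply: (chernoff_exp mA2 (c := 1 - alpha)
      (q := fine (Pth th (~` Sle eta (y + eps)))) (e := e)) => //.
    - rewrite hq2; lra.
    - move=> J; exact: (indep_BI mS2 hlaw hind J).
  have PL : (P L <= (r ^+ n)%:E)%E.
    apply: (chernoff_exp mA1 (c := alpha)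
      (q := fine (Pth th (Sle eta (y - eps)))) (e := e)) => //.
    - rewrite hq1; lra.
    - move=> J; exact: (indep_BI mS1 hlaw hind J).
  split; first by rewrite EM; exact: measurableU.
  rewrite EM.
  apply: (@le_trans _ _ (P (U `|` L))).
    by apply: le_measure; rewrite ?inE //; exact: measurableU.
  apply: le_trans (measureU2 _ mU mL) _.
  by rewrite mulr2n EFinD; exact: leeD.
have a0 : 0 < e ^+ 2 / 8 by rewrite divr_gt0 ?exprn_gt0.
have [Cb [r' /andP[r'0 r'1] hC]] := poly_geom_bound hbeta a0.
have bound : forall n, (1 <= n)%N ->
  measurable [set w | exists2 th, th \in ThetaK n &
        (eps < `| ginv (ecdf n eta (fun i => X n th i w)) alpha
                 - ginv (pushcdf (Pth th) eta) alpha |)%R] /\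
  (P [set w | exists2 th, th \in ThetaK n &
        (eps < `| ginv (ecdf n eta (fun i => X n th i w)) alpha
                 - ginv (pushcdf (Pth th) eta) alpha |)%R] <= ((r' ^+ n * (2 * K * Cb))%R)%:E)%E.
  move=> n n1.
  have [mE hE] := union_seq P (Q := fun th => [set w |
        (eps < `| ginv (ecdf n eta (fun i => X n th i w)) alpha
                 - ginv (pushcdf (Pth th) eta) alpha |)%R])
      (fun th thK => (main n th n1 thK).1).
  split; first exact: mE.
  apply: le_trans hE _.
  apply: (@le_trans _ _ (\sum_(th <- ThetaK n) ((r ^+ n *+ 2)%:E))%E).
    rewrite big_seq [X in (_ <= X)%E]big_seq; apply: lee_sum => th thK.
    exact: (main n th n1 thK).2.
  rewrite sumEFin sum_const_seq lee_fin.
  have hs := ThetaK_card n n1.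
  have hc : n%:R `^ beta * r ^+ n <= Cb * r' ^+ n := hC n n1.
  have r0 : 0 <= r by rewrite expR_ge0.
  have e5 : (r ^+ n *+ 2) *+ size (ThetaK n) = r ^+ n * 2 * (size (ThetaK n))%:R.
    by rewrite !mulr_natr.
  rewrite e5.
  have h1 : r ^+ n * 2 * (size (ThetaK n))%:R <= r ^+ n * 2 * (K * n%:R `^ beta).
    by apply: ler_wpM2l => //; rewrite mulr_ge0 ?exprn_ge0.
  have h2 : r ^+ n * 2 * (K * n%:R `^ beta) = 2 * K * (n%:R `^ beta * r ^+ n) by ring.
  have h3 : 2 * K * (n%:R `^ beta * r ^+ n) <= 2 * K * (Cb * r' ^+ n).
    by apply: ler_wpM2l => //; rewrite mulr_ge0 // ltW.
  have h4 : 2 * K * (Cb * r' ^+ n) = r' ^+ n * (2 * K * Cb) by ring.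
  by rewrite -h4; apply: le_trans h3; rewrite -h2.
apply/fine_cvgP; split.
  exists 1%N => // n /= n1; have [mE _] := bound n n1.
  by rewrite fin_num_measure.
apply: (@squeeze_cvgr _ _ _ _ (fun _ => 0) (fun n => r' ^+ n * (2 * K * Cb))).
- exists 1%N => // n /= n1; have [mE hE] := bound n n1.
  apply/andP; split; first by rewrite fine_ge0.
  have hf : P [set w | exists2 th, th \in ThetaK n &
        (eps < `| ginv (ecdf n eta (fun i => X n th i w)) alpha
                 - ginv (pushcdf (Pth th) eta) alpha |)%R] \is a fin_num.
    by rewrite fin_num_measure.
  by rewrite -lee_fin fineK.
- exact: cvg_cst.
- rewrite -(mul0r (2 * K * Cb)).
  have hr : `|r'| < 1 by rewrite ger0_norm.
  exact: cvgMr_tmp (cvg_expr hr).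
Qed.
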